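(* Let $k\ge 3$ be an integer and let $\varepsilon\in(0,1)$ satisfy $1/\varepsilon > k$. Then \[ d(k,\varepsilon) \ \le\ \frac{1}{2}\left(\frac{\log\big(r_k(\lfloor 1/\varepsilon+1\rfloor)+1\big)}{\log\big(\lfloor 1/\varepsilon+1\rfloor\big)}+1\right). \]
   Context: A $k$-term arithmetic progression ($k$AP) is a set $P=\{x, x+\lambda, \dots, x+(k-1)\lambda\}\subset\mathbb{R}$ with $\lambda>0$, called the gap length of $P$. For $N\in\mathbb{N}$, $r_k(N)$ denotes the maximal cardinality of a subset $A\subseteq\{1,\dots,N\}$ that contains no $k$AP. Given $\varepsilon\in(0,1)$, a set $E\subset\mathbb{R}$ is said to $\varepsilon$-avoid $k$APs if for every $k$AP $P$ with gap length $\lambda$ one has $\sup_{p\in P}\inf_{x\in E}|x-p|\ \ge\ \varepsilon\lambda$. Define $d(k,\varepsilon)=\sup\{\dim_H(E): E\subset\mathbb{R} \text{ bounded and } E \ \varepsilon\text{-avoids } k\text{APs}\}$, where $\dim_H$ is Hausdorff dimension. *)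

(* Defs.v *)
From Stdlib Require Import Reals Lra Lia ZArith List Classical ClassicalEpsilon.
Open Scope R_scope.

(* A (finite) set of naturals, given as a duplicate-free list, contains a kAP
   x, x+l, ..., x+(k-1)l with gap l > 0. (A kAP in R contained in a set of
   integers necessarily has integer start and integer gap.) *)
Definition contains_kAP (k : nat) (A : list nat) : Prop :=
  exists x l : nat, (0 < l)%nat /\ forall i : nat, (i < k)%nat -> In (x + i * l)%nat A.

Definition kAP_free_subset (k N : nat) (A : list nat) : Prop :=
  NoDup A /\ (forall a, In a A -> (1 <= a <= N)%nat) /\ ~ contains_kAP k A.

Definition is_rk (k N n : nat) : Prop :=
  (exists A, kAP_free_subset k N A /\ length A = n) /\
  (forall A, kAP_free_subset k N A -> (length A <= n)%nat).

(* r_k(N) (the maximum exists since there are finitely many subsets) *)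
Definition r_k (k N : nat) : nat :=
  epsilon (inhabits 0%nat) (fun n => is_rk k N n).

Definition bounded (E : R -> Prop) : Prop :=
  exists M, forall x, E x -> Rabs x <= M.

(* E eps-avoids kAPs: for every kAP P = {x, x+l, ..., x+(k-1)l}, l > 0,
   sup_{p in P} inf_{y in E} |y - p| >= eps * l.  Since P is finite the sup is a
   max, and inf_{y in E} |y-p| >= c means |y-p| >= c for all y in E. *)
Definition eps_avoids_kAPs (k : nat) (eps : R) (E : R -> Prop) : Prop :=
  forall x l : R, 0 < l ->
    exists i : nat, (i < k)%nat /\
      forall y, E y -> Rabs (y - (x + INR i * l)) >= eps * l.

Definition dist_set (U : R -> Prop) (r : R) : Prop :=
  exists x y, U x /\ U y /\ r = Rabs (x - y).

(* diameter: sup of pairwise distances; 0 for the empty set (and, by an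
   irrelevant convention, for unbounded sets, which never occur below since
   the covering sets are required to have all distances <= delta). *)
Definition diam (U : R -> Prop) : R :=
  epsilon (inhabits 0)
    (fun d => is_lub (dist_set U) d \/ ((~ exists d', is_lub (dist_set U) d') /\ d = 0)).

(* diam(U)^s with the convention 0^s = 0 (s > 0) *)
Definition diam_pow (U : R -> Prop) (s : R) : R :=
  if Rle_dec (diam U) 0 then 0 else Rpower (diam U) s.

(* H^s(E) = 0, written out: for every delta > 0, H^s_delta(E) = 0, i.e. for
   every eta > 0 there is a countable delta-cover (U_n) of E with
   sum_n diam(U_n)^s < eta. *)
Definition Hausdorff_null (s : R) (E : R -> Prop) : Prop :=
  forall delta eta : R, 0 < delta -> 0 < eta ->
    exists U : nat -> (R -> Prop),
      (forall x, E x -> exists n, U n x) /\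
      (forall n x y, U n x -> U n y -> Rabs (x - y) <= delta) /\
      (forall n, diam (U n) <= delta) /\
      exists l, infinite_sum (fun n => diam_pow (U n) s) l /\ l < eta.

Definition is_glb (S : R -> Prop) (m : R) : Prop :=
  (forall s, S s -> m <= s) /\ (forall b, (forall s, S s -> b <= s) -> b <= m).

(* Hausdorff dimension: dim_H E = inf { s > 0 : H^s(E) = 0 }
   (for subsets of R this set is nonempty and bounded below, so the inf exists) *)
Definition dimH (E : R -> Prop) : R :=
  epsilon (inhabits 0) (fun d => is_glb (fun s => 0 < s /\ Hausdorff_null s E) d).

Definition dim_set (k : nat) (eps : R) (t : R) : Prop :=
  exists E : R -> Prop, bounded E /\ eps_avoids_kAPs k eps E /\ t = dimH E.

Definition d_k_eps (k : nat) (eps : R) : R :=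
  epsilon (inhabits 0) (fun d => is_lub (dim_set k eps) d).

(* Main.v *)
Require Import Defs.
From Stdlib Require Import Reals ZArith.
From Stdlib Require Import Lra Lia List Classical ClassicalEpsilon.
Open Scope R_scope.

Lemma exp_le_mono x y : x <= y -> exp x <= exp y.
Proof. intros [H|H]; [left; apply exp_increasing; auto | subst; lra]. Qed.

Lemma Rdiv_le_0_compat' a b : 0 <= a -> 0 < b -> 0 <= a / b.
Proof. intros. unfold Rdiv. apply Rmult_le_pos; [lra|]. left; apply Rinv_0_lt_compat; lra. Qed.

Lemma ln_le_mono x y : 0 < x -> x <= y -> ln x <= ln y.
Proof. intros Hx [H|H]; [left; apply ln_increasing; auto | subst; lra]. Qed.

Lemma diam_le (U : R -> Prop) (D : R) : 0 <= D ->
  (forall x y, U x -> U y -> Rabs (x - y) <= D) -> diam U <= D.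
Proof.
  intros HD HU. unfold diam.
  assert (Hex : exists d, is_lub (dist_set U) d \/
     ((~ exists d', is_lub (dist_set U) d') /\ d = 0)).
  { destruct (classic (exists d', is_lub (dist_set U) d')) as [[d' Hd']|Hn].
    - exists d'; left; exact Hd'.
    - exists 0; right; split; auto. }
  destruct (epsilon_spec (inhabits 0) _ Hex) as [Hl | [_ H0]].
  - apply Hl. intros r [x [y [Hx [Hy ->]]]]. apply HU; auto.
  - rewrite H0; exact HD.
Qed.

Lemma diam_pow_nonneg U s : 0 <= diam_pow U s.
Proof.
  unfold diam_pow. destruct (Rle_dec (diam U) 0); [lra|].
  unfold Rpower; left; apply exp_pos.
Qed.

Lemma diam_pow_le U s D : 0 < D -> 0 <= s -> diam U <= D -> diam_pow U s <= Rpower D s.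
Proof.
  intros HD Hs Hd. unfold diam_pow. destruct (Rle_dec (diam U) 0).
  - unfold Rpower; left; apply exp_pos.
  - unfold Rpower. apply exp_le_mono. apply Rmult_le_compat_l; auto.
    apply ln_le_mono; lra.
Qed.

Lemma diam_pow_zero U s : (forall x, ~ U x) -> diam_pow U s = 0.
Proof.
  intros H. unfold diam_pow. destruct (Rle_dec (diam U) 0); auto.
  exfalso. apply n. apply diam_le; [lra|]. intros x y Hx. exfalso; eapply H; eauto.
Qed.

Lemma sum_bound (f : nat -> R) (K : nat) (c : R) : 0 <= c ->
  (forall n, 0 <= f n) -> (forall n, (n < K)%nat -> f n <= c) ->
  (forall n, (K <= n)%nat -> f n = 0) ->
  forall m, sum_f_R0 f m <= INR K * c.
Proof.
  intros Hc H0 H1 H2.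
  assert (forall m, sum_f_R0 f m <= INR (Nat.min (S m) K) * c).
  { induction m as [|m IH].
    - simpl. destruct K as [|K].
      + rewrite H2 by lia. simpl. lra.
      + simpl. replace (Nat.min 0 K) with 0%nat by lia. simpl.
        specialize (H1 0%nat ltac:(lia)). lra.
    - simpl sum_f_R0. destruct (Nat.lt_ge_cases (S m) K) as [Hl|Hl].
      + replace (Nat.min (S (S m)) K) with (S (S m)) by lia.
        replace (Nat.min (S m) K) with (S m) in IH by lia.
        rewrite (S_INR (S m)). specialize (H1 (S m) Hl). nra.
      + rewrite H2 by lia.
        replace (Nat.min (S (S m)) K) with (Nat.min (S m) K) by lia. lra. }
  intros m. eapply Rle_trans; [apply H|].
  apply Rmult_le_compat_r; auto. apply le_INR; lia.
Qed.

Lemma inf_sum_fin f K : (forall n, (K <= n)%nat -> f n = 0) ->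
  infinite_sum f (sum_f_R0 f K).
Proof.
  intros H e He. exists K. intros n Hn. unfold R_dist.
  assert (E : sum_f_R0 f n = sum_f_R0 f K).
  { induction Hn; auto. simpl. rewrite H by lia. lra. }
  rewrite E. unfold Rminus. rewrite Rplus_opp_r, Rabs_R0. lra.
Qed.

Lemma cover_grid (a h y : R) (K : nat) : 0 < h -> (1 <= K)%nat ->
  a <= y <= a + INR K * h ->
  exists q, (q < K)%nat /\ a + INR q * h <= y <= a + INR q * h + h.
Proof.
  intros Hh HK. induction K as [|K IH]; [lia|]. intros Hy.
  destruct (Nat.eq_dec K 0) as [->|HK0].
  - exists 0%nat. simpl in *. split; [lia|]. lra.
  - destruct (Rle_dec y (a + INR K * h)).
    + destruct IH as [q [Hq Hq']]; [lia| lra |]. exists q; split; [lia|lra].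
    + exists K. rewrite S_INR in Hy. split; [lia|]. lra.
Qed.

Lemma nat_max (P : nat -> Prop) B : (exists n, P n) ->
  (forall n, P n -> (n <= B)%nat) -> exists n, P n /\ forall m, P m -> (m <= n)%nat.
Proof.
  intros [n0 Hn0] HB. apply NNPP. intros Hno.
  assert (Hs : forall n, P n -> exists m, P m /\ (n < m)%nat).
  { intros n Hn. apply NNPP. intros Hc. apply Hno. exists n. split; auto.
    intros m Hm. destruct (Nat.le_gt_cases m n); auto. exfalso; apply Hc; eauto. }
  assert (Hj : forall j, exists n, P n /\ (j <= n)%nat).
  { induction j as [|j [n [Hn Hjn]]]. exists n0; split; auto; lia.
    destruct (Hs n Hn) as [m [Hm Hnm]]. exists m; split; auto; lia. }
  destruct (Hj (S B)) as [n [Hn Hbn]]. specialize (HB n Hn). lia.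
Qed.

Lemma rk_spec k N : (1 <= k)%nat -> is_rk k N (r_k k N).
Proof.
  intros Hk. unfold r_k. apply epsilon_spec.
  destruct (nat_max (fun n => exists A, kAP_free_subset k N A /\ length A = n) N)
    as [n [[A [HA HAl]] Hmax]].
  - exists 0%nat, nil. split; auto. split; [constructor|]. split.
    + intros a [].
    + intros [x [l [_ Hin]]]. exact (Hin 0%nat Hk).
  - intros n [A [[HD [Hr _]] <-]]. rewrite <- (length_seq N 1).
    apply NoDup_incl_length; auto. intros a Ha. apply in_seq. specialize (Hr a Ha). lia.
  - exists n. split. exists A; auto. intros B HB. apply Hmax. exists B; auto.
Qed.

Definition lft (b Lb : R) (N m j : nat) : R :=
  b + (INR m - 1) * (Lb / INR N) + INR j * (Lb / (INR N * INR N)).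

Definition meets (E : R -> Prop) (c h : R) : Prop := exists y, E y /\ c <= y <= c + h.

Definition Pb (E : R -> Prop) (b Lb : R) (N j m : nat) : bool :=
  if excluded_middle_informative (meets E (lft b Lb N m j) (Lb / (INR N * INR N)))
  then true else false.

Definition step (E : R -> Prop) (N : nat) (b Lb : R) : list R :=
  flat_map (fun j => map (fun m => lft b Lb N m j) (filter (Pb E b Lb N j) (seq 1 N)))
    (seq 0 N).

Lemma step_cover E N b Lb : 0 < Lb -> (1 <= N)%nat -> forall y, E y -> b <= y <= b + Lb ->
  exists c, In c (step E N b Lb) /\ c <= y <= c + Lb / (INR N * INR N).
Proof.
  intros HL HN y Hy Hby.
  assert (HNr : 0 < INR N) by (apply lt_0_INR; lia).
  set (h := Lb / (INR N * INR N)).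
  assert (Hh : 0 < h) by (unfold h; apply Rdiv_lt_0_compat; nra).
  destruct (cover_grid b h y (N * N) Hh ltac:(nia)) as [q [Hq Hq']].
  { rewrite mult_INR. unfold h. replace (b + INR N * INR N * (Lb / (INR N * INR N)))
      with (b + Lb) by (field; lra). lra. }
  pose proof (Nat.div_mod_eq q N) as Hdm.
  assert (Hqd : (q / N < N)%nat) by (apply Nat.Div0.div_lt_upper_bound; lia).
  assert (Hqm : (q mod N < N)%nat) by (apply Nat.mod_upper_bound; lia).
  assert (Hc : lft b Lb N (S (q / N)) (q mod N) = b + INR q * h).
  { unfold lft, h. rewrite Hdm at 3. rewrite plus_INR, mult_INR, S_INR.
    field. lra. }
  exists (lft b Lb N (S (q / N)) (q mod N)). split.
  - unfold step. apply in_flat_map. exists (q mod N). split.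
    + apply in_seq. lia.
    + apply (in_map (fun m => lft b Lb N m (q mod N))). apply filter_In. split.
      * apply in_seq. lia.
      * unfold Pb. destruct excluded_middle_informative as [|Hn]; auto.
        exfalso. apply Hn. exists y. split; auto. fold h. rewrite Hc. lra.
  - rewrite Hc. fold h. lra.
Qed.

Lemma length_flat_map_le {A B} (f : A -> list B) (l : list A) (K : nat) :
  (forall x, In x l -> (length (f x) <= K)%nat) -> (length (flat_map f l) <= length l * K)%nat.
Proof.
  induction l as [|x l IH]; intros H; simpl; auto.
  rewrite length_app.
  assert (length (flat_map f l) <= length l * K)%nat by (apply IH; intros; apply H; simpl; auto).
  specialize (H x (or_introl eq_refl)). lia.
Qed.

Lemma step_length k eps E N r b Lb : (1 <= k)%nat -> (1 <= N)%nat -> 0 < Lb -> 0 < eps ->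
  1 < eps * INR N -> is_rk k N r -> eps_avoids_kAPs k eps E ->
  (length (step E N b Lb) <= N * r)%nat.
Proof.
  intros Hk HN HL He HeN Hrk Hav.
  assert (HNr : 0 < INR N) by (apply lt_0_INR; lia).
  assert (Hinv : / INR N < eps).
  { apply (Rmult_lt_reg_r (INR N)); [lra|]. rewrite Rinv_l by lra. lra. }
  unfold step. rewrite <- (length_seq N 0) at 2.
  apply length_flat_map_le. intros j Hj. rewrite length_map.
  apply (proj2 Hrk). split; [|split].
  - apply NoDup_filter, seq_NoDup.
  - intros a Ha. apply filter_In in Ha. destruct Ha as [Ha _]. apply in_seq in Ha. lia.
  - intros [x0 [l0 [Hl0 Hin]]].
    assert (Hx0 : (1 <= x0)%nat).
    { specialize (Hin 0%nat Hk). apply filter_In in Hin. destruct Hin as [Hin _].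
      apply in_seq in Hin. lia. }
    set (w := Lb / INR N).
    assert (Hw : 0 < w) by (unfold w; apply Rdiv_lt_0_compat; lra).
    assert (Hl : 0 < INR l0 * w) by (apply Rmult_lt_0_compat; auto; apply lt_0_INR; lia).
    destruct (Hav (lft b Lb N x0 j) (INR l0 * w) Hl) as [i [Hi Hfar]].
    specialize (Hin i Hi). apply filter_In in Hin. destruct Hin as [_ HP].
    unfold Pb in HP. destruct excluded_middle_informative as [[y [Hy Hyr]]|]; [|discriminate].
    specialize (Hfar y Hy).
    assert (Hc : lft b Lb N (x0 + i * l0) j = lft b Lb N x0 j + INR i * (INR l0 * w)).
    { unfold lft, w. rewrite plus_INR, mult_INR. ring. }
    rewrite Hc in Hyr.
    assert (Hh : Lb / (INR N * INR N) = w * / INR N) by (unfold w; field; lra).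
    rewrite Hh in Hyr.
    assert (Hl1 : 1 <= INR l0) by (apply (le_INR 1); lia).
    assert (Rabs (y - (lft b Lb N x0 j + INR i * (INR l0 * w))) <= w * / INR N).
    { unfold Rabs; destruct Rcase_abs; lra. }
    assert (w * / INR N < eps * (INR l0 * w)).
    { assert (0 < / INR N) by (apply Rinv_0_lt_compat; lra). nra. }
    lra.
Qed.

Lemma levels k eps E N r (a L : R) : (1 <= k)%nat -> (1 <= N)%nat -> 0 < eps ->
  1 < eps * INR N -> is_rk k N r -> eps_avoids_kAPs k eps E ->
  0 < L -> (forall y, E y -> a <= y <= a + L) ->
  forall n, exists cs : list R, (length cs <= Nat.pow (N * r) n)%nat /\
    forall y, E y -> exists c, In c cs /\ c <= y <= c + L * (/ (INR N * INR N)) ^ n.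
Proof.
  intros Hk HN He HeN Hrk Hav HL HE.
  assert (HNr : 0 < INR N) by (apply lt_0_INR; lia).
  assert (Hx2 : 0 < / (INR N * INR N)) by (apply Rinv_0_lt_compat; nra).
  induction n as [|n [cs [Hlen Hcov]]].
  - exists (a :: nil). split; [simpl; lia|]. intros y Hy. exists a. split; [simpl; auto|].
    simpl. specialize (HE y Hy). lra.
  - set (Ln := L * (/ (INR N * INR N)) ^ n).
    assert (HLn : 0 < Ln) by (unfold Ln; apply Rmult_lt_0_compat; auto; apply pow_lt; auto).
    exists (flat_map (fun c => step E N c Ln) cs). split.
    + eapply Nat.le_trans. apply length_flat_map_le.
      intros c _. apply (step_length k eps E N r c Ln); auto.
      simpl Nat.pow. rewrite (Nat.mul_comm (N * r)). apply Nat.mul_le_mono_r. auto.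
    + intros y Hy. destruct (Hcov y Hy) as [c [Hc Hyc]].
      destruct (step_cover E N c Ln HLn HN y Hy Hyc) as [c' [Hc' Hyc']].
      exists c'. split.
      * apply in_flat_map. exists c; auto.
      * replace (L * (/ (INR N * INR N)) ^ S n) with (Ln / (INR N * INR N)).
        lra. unfold Ln. simpl. field. lra.
Qed.

Lemma null_t k eps E N r : (1 <= k)%nat -> (2 <= N)%nat -> 0 < eps ->
  1 < eps * INR N -> is_rk k N r -> eps_avoids_kAPs k eps E -> Defs.bounded E ->
  Hausdorff_null (/ 2 * (ln (INR r + 1) / ln (INR N) + 1)) E.
Proof.
  intros Hk HN He HeN Hrk Hav [M0 HM0].
  set (t := / 2 * (ln (INR r + 1) / ln (INR N) + 1)).
  assert (HNr : 2 <= INR N) by (apply (le_INR 2); lia).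
  assert (HlnN : 0 < ln (INR N)).
  { rewrite <- ln_1. apply ln_increasing; lra. }
  assert (Hr0 : 0 <= INR r) by apply pos_INR.
  assert (Hlnr : 0 <= ln (INR r + 1)).
  { rewrite <- ln_1. apply ln_le_mono; lra. }
  assert (Ht : 0 < t).
  { unfold t. assert (0 <= ln (INR r + 1) / ln (INR N)) by (apply Rdiv_le_0_compat'; lra). lra. }
  assert (Ht2 : t * ln (INR N) * 2 = ln (INR r + 1) + ln (INR N)) by (unfold t; field; lra).
  set (Mp := Rabs M0 + 1). set (a := - Mp). set (L := 2 * Mp).
  assert (HMp : 0 < Mp) by (unfold Mp; pose proof (Rabs_pos M0); lra).
  assert (HL : 0 < L) by (unfold L; lra).
  assert (HE : forall y, E y -> a <= y <= a + L).
  { intros y Hy. specialize (HM0 y Hy). pose proof (Rle_abs M0).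
    unfold a, L, Mp. revert HM0. unfold Rabs at 1. destruct Rcase_abs; intros; lra. }
  intros delta eta Hd Heta.
  set (x1 := INR r / (INR r + 1)). set (x2 := / (INR N * INR N)).
  assert (Hx1 : 0 <= x1 < 1).
  { unfold x1. split. apply Rdiv_le_0_compat'; lra.
    apply (Rmult_lt_reg_r (INR r + 1)); [lra|]. unfold Rdiv. rewrite Rmult_assoc, Rinv_l by lra. lra. }
  assert (Hx2 : 0 < x2 < 1).
  { unfold x2. split. apply Rinv_0_lt_compat; nra.
    apply (Rmult_lt_reg_r (INR N * INR N)); [nra|]. rewrite Rinv_l by nra. nra. }
  set (C := Rpower L t).
  assert (HC : 0 < C) by (unfold C, Rpower; apply exp_pos).
  destruct (pow_lt_1_zero x1 ltac:(rewrite Rabs_pos_eq; lra) (eta / C)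
    ltac:(apply Rdiv_lt_0_compat; lra)) as [n1 Hn1].
  destruct (pow_lt_1_zero x2 ltac:(rewrite Rabs_pos_eq; lra) (delta / L)
    ltac:(apply Rdiv_lt_0_compat; lra)) as [n2 Hn2].
  set (n := Nat.max n1 n2).
  specialize (Hn1 n ltac:(unfold n; lia)). specialize (Hn2 n ltac:(unfold n; lia)).
  rewrite Rabs_pos_eq in Hn1 by (apply pow_le; lra).
  rewrite Rabs_pos_eq in Hn2 by (apply pow_le; lra).
  destruct (levels k eps E N r a L Hk ltac:(lia) He HeN Hrk Hav HL HE n) as [cs [Hlen Hcov]].
  fold x2 in Hcov.
  set (Ln := L * x2 ^ n) in Hcov.
  assert (HLn : 0 < Ln) by (unfold Ln; apply Rmult_lt_0_compat; auto; apply pow_lt; lra).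
  assert (HLnd : Ln < delta).
  { unfold Ln. apply (Rmult_lt_compat_l L) in Hn2; auto. unfold Rdiv in Hn2.
    rewrite (Rmult_comm delta), <- Rmult_assoc, Rinv_r, Rmult_1_l in Hn2; lra. }
  set (U := fun i x => (i < length cs)%nat /\ nth i cs 0 <= x <= nth i cs 0 + Ln).
  assert (HUd : forall i x y, U i x -> U i y -> Rabs (x - y) <= Ln).
  { intros i x y [_ Hx] [_ Hy]. unfold Rabs; destruct Rcase_abs; lra. }
  exists U. split; [|split; [|split]].
  - intros y Hy. destruct (Hcov y Hy) as [c [Hc Hyc]].
    destruct (In_nth cs c 0 Hc) as [i [Hi Hic]]. exists i. unfold U. rewrite Hic. auto.
  - intros i x y Hx Hy. specialize (HUd i x y Hx Hy). lra.
  - intros i. apply (Rle_trans _ Ln). apply diam_le; [lra|]. apply HUd. lra.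
  - exists (sum_f_R0 (fun i => diam_pow (U i) t) (length cs)). split.
    + apply inf_sum_fin. intros i Hi. apply diam_pow_zero. intros x [Hx _]. lia.
    + eapply Rle_lt_trans.
      * apply (sum_bound _ (length cs) (Rpower Ln t)).
        -- unfold Rpower; left; apply exp_pos.
        -- intros; apply diam_pow_nonneg.
        -- intros i _. apply diam_pow_le; [lra|lra|]. apply diam_le; [lra|]. apply HUd.
        -- intros i Hi. apply diam_pow_zero. intros x [Hx _]. lia.
      * assert (Hkey : INR (Nat.pow (N * r) n) * Rpower Ln t = C * x1 ^ n).
        { assert (HRp : Rpower Ln t = C * (/ ((INR r + 1) * INR N)) ^ n).
          { unfold Ln, C, Rpower.
            rewrite <- (Rpower_pow n (/ ((INR r + 1) * INR N))) by (apply Rinv_0_lt_compat; nra).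
            unfold Rpower. rewrite <- exp_plus. f_equal.
            rewrite ln_mult by (auto; apply pow_lt; lra).
            rewrite ln_pow by lra. unfold x2.
            rewrite ln_Rinv by nra. rewrite ln_Rinv by nra.
            rewrite ln_mult by lra. rewrite ln_mult by lra.
            replace (t * (ln L + INR n * - (ln (INR N) + ln (INR N))))
              with (t * ln L - INR n * (t * ln (INR N) * 2)) by ring.
            rewrite Ht2. ring. }
          rewrite HRp. rewrite pow_INR, mult_INR.
          replace (C * x1 ^ n) with (C * ((INR N * INR r) * / ((INR r + 1) * INR N)) ^ n).
          rewrite (Rpow_mult_distr _ (/ _)). ring.
          f_equal. f_equal. unfold x1. field. lra. }
        assert (HlenR : INR (length cs) <= INR (Nat.pow (N * r) n)) by (apply le_INR; auto).
        assert (HRpos : 0 < Rpower Ln t) by (unfold Rpower; apply exp_pos).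
        apply (Rmult_lt_compat_l C) in Hn1; auto.
        replace (C * (eta / C)) with eta in Hn1 by (field; lra).
        nra.
Qed.

Lemma dimH_le E t : 0 < t -> Hausdorff_null t E -> dimH E <= t.
Proof.
  intros Ht Hn.
  set (S := fun s => 0 < s /\ Hausdorff_null s E).
  assert (Hb : bound (fun x => S (- x))).
  { exists 0. intros x [Hx _]. lra. }
  assert (Hne : exists x, S (- x)).
  { exists (- t). unfold S. rewrite Ropp_involutive. auto. }
  destruct (completeness _ Hb Hne) as [m [Hm1 Hm2]].
  assert (Hex : exists d, is_glb S d).
  { exists (- m). split.
    - intros s Hs. assert (- s <= m) by (apply Hm1; rewrite Ropp_involutive; auto). lra.
    - intros b Hbnd. assert (m <= - b).
      { apply Hm2. intros x Hx. specialize (Hbnd _ Hx). lra. }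
      lra. }
  unfold dimH. pose proof (epsilon_spec (inhabits 0) _ Hex) as [H1 _].
  apply H1. unfold S; auto.
Qed.

Lemma dk_le k eps t : (1 <= k)%nat ->
  (forall E, Defs.bounded E -> eps_avoids_kAPs k eps E -> dimH E <= t) -> d_k_eps k eps <= t.
Proof.
  intros Hk H.
  assert (Hb : bound (dim_set k eps)).
  { exists t. intros x [E [HB [HA ->]]]. apply H; auto. }
  assert (Hne : exists x, dim_set k eps x).
  { exists (dimH (fun _ => False)). exists (fun _ => False). split; [|split; auto].
    - exists 0. intros x [].
    - intros x l Hl. exists 0%nat. split; auto. intros y []. }
  destruct (completeness _ Hb Hne) as [m Hm].
  assert (Hex : exists d, is_lub (dim_set k eps) d) by (exists m; auto).
  unfold d_k_eps. pose proof (epsilon_spec (inhabits 0) _ Hex) as [_ H2].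
  apply H2. intros x [E [HB [HA ->]]]. apply H; auto.
Qed.

Theorem theorem1p1 (k : nat) (eps : R) :
  (3 <= k)%nat -> 0 < eps < 1 -> 1 / eps > INR k ->
  let N := Z.to_nat (Int_part (1 / eps + 1)) in
  d_k_eps k eps <=
    / 2 * (ln (INR (r_k k N) + 1) / ln (INR N) + 1).
Proof.
  intros Hk He Hke N.
  destruct (base_Int_part (1 / eps + 1)) as [Hi1 Hi2].
  assert (HkR : 3 <= INR k) by (pose proof (le_INR 3 k ltac:(lia)) as HH; simpl in HH; lra).
  assert (Hpos : (0 <= Int_part (1 / eps + 1))%Z).
  { apply le_IZR. lra. }
  assert (HN : INR N = IZR (Int_part (1 / eps + 1))).
  { unfold N. rewrite INR_IZR_INZ, Z2Nat.id; auto. }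
  assert (HNe : 1 / eps < INR N) by lra.
  assert (HeN : 1 < eps * INR N).
  { apply (Rmult_lt_compat_l eps) in HNe; [|lra].
    replace (eps * (1 / eps)) with 1 in HNe by (field; lra). lra. }
  assert (HN2 : (2 <= N)%nat).
  { assert (2 < INR N) by lra. apply INR_lt. simpl; lra. }
  apply dk_le; [lia|]. intros E HB HA.
  apply dimH_le.
  - assert (0 < ln (INR N)).
    { rewrite <- ln_1. apply ln_increasing; lra. }
    assert (0 <= ln (INR (r_k k N) + 1)).
    { rewrite <- ln_1. apply ln_le_mono; [lra|]. pose proof (pos_INR (r_k k N)). lra. }
    assert (0 <= ln (INR (r_k k N) + 1) / ln (INR N)) by (apply Rdiv_le_0_compat'; lra).
    lra.
  - apply (null_t k eps E N (r_k k N)); auto; try lia; try lra.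
    apply rk_spec. lia.
Qed.
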